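(* Let $p$ be a real polynomial with $\lim_{|x|\to\infty}p(x)=\infty$. (1) Suppose $p'$ is positive and increasing on an interval $(x_0,x_f)$, where $x_f$ may be $+\infty$, and, if $x_f<\infty$, that $p(x_f)\ge p(x_0)+1$. Then $\int_{x_0}^{x_f}e^{-p(x)}\,dx\approx e^{-p(x_0)}\,|\{x\in(x_0,x_f):p(x_0)<p(x)<p(x_0)+1\}|$. (2) Suppose $p'$ is negative and increasing on an interval $(x_f,x_0)$, where $x_f$ may be $-\infty$, and, if $x_f>-\infty$, that $p(x_f)\ge p(x_0)+1$. Then $\int_{x_f}^{x_0}e^{-p(x)}\,dx\approx e^{-p(x_0)}\,|\{x\in(x_f,x_0):p(x_0)<p(x)<p(x_0)+1\}|$. (3) Suppose $p'$ is either (i) positive and increasing on $I=(x_0,x_f)$ with $x_f<\infty$, or (ii) negative and increasing on $I=(x_f,x_0)$ with $x_f>-\infty$, and suppose $p(x_0)<p(x_f)<p(x_0)+1$. Then $\int_Ie^{-p(x)}\,dx\approx e^{-p(x_0)}|x_f-x_0|$.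
   Context: $X\approx Y$ means there is an absolute constant $c>0$ (independent of $p$ and of the interval) with $cY\le X\le c^{-1}Y$; $|E|$ denotes Lebesgue measure. *)

(* Defs.v *)
From HB Require Import structures.
From mathcomp Require Import all_boot all_order all_algebra.
From mathcomp Require Import all_classical all_reals all_analysis.
Set Implicit Arguments. Unset Strict Implicit. Unset Printing Implicit Defensive.
Import Order.TTheory GRing.Theory Num.Theory.
Import numFieldNormedType.Exports.
Local Open Scope classical_set_scope.
Local Open Scope ring_scope.

Definition poly_to_pinfty (R : realType) (p : {poly R}) : Prop :=
  (p.[x] @[x --> +oo] --> +oo) /\ (p.[x] @[x --> -oo] --> +oo).

Definition eoitv (R : realType) (a b : \bar R) : set R :=
  [set x : R | (a < x%:E)%E /\ (x%:E < b)%E].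

Definition int_exp_neg (R : realType) (p : {poly R}) (I : set R) : \bar R :=
  (\int[@lebesgue_measure R]_(x in I) (expR (- p.[x]))%:E)%E.

Definition deriv_pos_incr (R : realType) (p : {poly R}) (I : set R) : Prop :=
  (forall x, I x -> 0 < (p^`()).[x]) /\
  (forall x y, I x -> I y -> x < y -> (p^`()).[x] < (p^`()).[y]).

Definition deriv_neg_incr (R : realType) (p : {poly R}) (I : set R) : Prop :=
  (forall x, I x -> (p^`()).[x] < 0) /\
  (forall x y, I x -> I y -> x < y -> (p^`()).[x] < (p^`()).[y]).

Definition approx_with (R : realType) (c : R) (X Y : \bar R) : Prop :=
  (c%:E * Y <= X)%E /\ (X <= c^-1%:E * Y)%E.

(* Main.v *)
Require Import Defs.
From HB Require Import structures.
From mathcomp Require Import all_boot all_order all_algebra.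
From mathcomp Require Import all_classical all_reals all_analysis.
From mathcomp Require Import measurable_realfun ftc.
From mathcomp Require Import ring lra.
Import Order.TTheory GRing.Theory Num.Theory.
Import numFieldNormedType.Exports.
Local Open Scope classical_set_scope.
Local Open Scope ring_scope.

Section H.
Context {R : realType}.
Notation mu := (@lebesgue_measure R).

Lemma meas_eoitv (a b : \bar R) : measurable (eoitv a b).
Proof.
have := @EFin_measurable R setT measurableT _ (emeasurable_itv (Interval (BRight a) (BLeft b))).
rewrite setTI; congr measurable; apply/seteqP; split => x /=; rewrite in_itv /=;
  by [move=> /andP[] | move=> [-> ->]].
Qed.

Lemma mexp (f : R -> R) (D : set R) : continuous f ->
  measurable_fun D (fun x => (expR (- f x))%:E).
Proof.
move=> cf; apply/measurable_EFinP; apply: measurable_funTS.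
apply: continuous_measurable_fun => x.
apply: continuous_comp; last exact: continuous_expR.
exact: (continuousN (cf x)).
Qed.

Lemma is_derive_comp1 (f g : R -> R) (x df dg : R) :
  is_derive x 1 f df -> is_derive (f x) 1 g dg -> is_derive x 1 (g \o f) (dg * df).
Proof.
move=> hf hg.
have d1 : derivable f x 1 by case: hf.
have d2 : derivable g (f x) 1 by case: hg.
apply: DeriveDef.
  apply/derivable1_diffP; apply: differentiable_comp; exact/derivable1_diffP.
rewrite -derive1E derive1_comp // !derive1E !derive_val //.
Qed.
Arguments is_derive_comp1 {f g x df dg}.

Lemma is_derive_aff (a L x : R) : is_derive x 1 (fun y : R => (a - y) / L) (- L^-1).
Proof.
apply: is_derive_eq.
by rewrite scaler0 !add0r mul1r scalerN scaler1.
Qed.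

Lemma key (a L K : R) : 0 < L -> 0 <= K ->
  (\int[mu]_(x in `[a, +oo[) (K * expR ((a - x) / L))%:E = (K * L)%:E)%E.
Proof.
move=> L0 K0.
set g := fun y : R => (a - y) / L.
have hF (x : R) : is_derive x 1 (fun y => - (K * L) * expR (g y)) (K * expR (g x)).
  have h1 := is_derive_comp1 (is_derive_aff a L x) (is_derive_expR _).
  have h2 := is_deriveZ (- (K * L)) h1.
  apply: is_derive_eq.
  rewrite /g; change (- (K * L) * (expR ((a - x) / L) * - L^-1) = K * expR ((a - x) / L)).
  by field; rewrite gt_eqF.
have cF : continuous (fun y : R => - (K * L) * expR (g y)).
  move=> x; apply: differentiable_continuous; apply/derivable1_diffP.
  by case: (hF x).
have cf : continuous (fun y : R => K * expR (g y)).
  move=> x; apply: (@continuousM _ R^o (fun=> K) (fun y => expR (g y))); first exact: cst_continuous.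
  apply: continuous_comp; last exact: continuous_expR.
  apply: differentiable_continuous; apply/derivable1_diffP.
  by case: (is_derive_aff a L x).
rewrite (@ge0_continuous_FTC2y _ (fun y => K * expR (g y)) (fun y => - (K * L) * expR (g y)) a 0).
- by rewrite /g subrr mul0r expR0 mulr1 EFinN sub0e oppeK.
- by move=> x _; rewrite mulr_ge0 ?expR_ge0.
- by apply: continuous_subspaceT => x; exact: cf.
- rewrite -(mulr0 (- (K * L))); apply: cvgMr.
  have hg : (fun x => (x - a) / L) @ +oo --> +oo.
    apply/cvgryPge => r; near=> x.
    rewrite ler_pdivlMr // lerBrDl; near: x; apply: nbhs_pinfty_ge; exact: num_real.
  have := cvg_comp _ _ hg (@cvgr_expR R).
  apply: cvg_trans; apply: near_eq_cvg; near=> x.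
  by rewrite /g /= -mulNr opprB.
- by move=> x _; case: (hF x).
- by apply: cvg_at_right_filter; exact: cF.
- by move=> x _; rewrite derive1E (@derive_val _ _ _ _ _ _ _ (hF x)).
Unshelve. all: by end_near. Qed.


Lemma keyN (b L K : R) : 0 < L -> 0 <= K ->
  (\int[mu]_(x in `]-oo, b]) (K * expR ((x - b) / L))%:E = (K * L)%:E)%E.
Proof.
move=> L0 K0.
have := @ge0_integration_by_substitutionNy R (fun x => K * expR ((x - b) / L)) (- b).
rewrite opprK => ->.
- rewrite -(key (- b) L K L0 K0); apply: eq_integral => x _ /=.
  by rewrite [- x - b]addrC.
- apply: continuous_subspaceT => x.
  apply: (@continuousM _ R^o (fun=> K) (fun y => expR ((y - b) / L))); first exact: cst_continuous.
  apply: continuous_comp; last exact: continuous_expR.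
  apply: differentiable_continuous; apply/derivable1_diffP.
  have : is_derive x 1 (fun y : R => (y - b) / L) (L^-1).
    by apply: is_derive_eq; rewrite scaler0 add0r subr0 scaler1.
  by case.
- by move=> x _; rewrite mulr_ge0 ?expR_ge0.
Qed.

Lemma cont_of {f df : R -> R} : (forall x : R, is_derive x 1 f (df x)) -> continuous f.
Proof.
move=> hd x; apply: differentiable_continuous; apply/derivable1_diffP.
by case: (hd x).
Qed.

Lemma mono_lt {f df : R -> R} {x y : R} :
  (forall x : R, is_derive x 1 f (df x)) -> x < y ->
  (forall z, x < z < y -> 0 < df z) -> f x < f y.
Proof.
move=> hd xy hpos.
have [c cxy E] := MVT xy (fun z _ => hd z) (continuous_subspaceT (cont_of hd)).
rewrite -subr_gt0 E mulr_gt0 // ?subr_gt0 //.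
by apply: hpos; move: cxy; rewrite in_itv.
Qed.

Lemma core {f df : R -> R} {x0 : R} {xf : \bar R} :
  (forall x : R, is_derive x 1 f (df x)) ->
  (forall x, eoitv x0%:E xf x -> 0 < df x) ->
  (forall x y, eoitv x0%:E xf x -> eoitv x0%:E xf y -> x < y -> df x < df y) ->
  (exists r, [/\ x0 < r, (r%:E <= xf)%E & f x0 + 1 <= f r]) ->
  exists x1, [/\ x0 < x1, (x1%:E <= xf)%E,
     (forall x, eoitv x0%:E xf x -> (f x0 < f x < f x0 + 1) <-> x < x1) &
     (forall x, eoitv x0%:E xf x -> (x - x0) / (x1 - x0) - 1 <= f x - f x0)].
Proof.
move=> hd hpos hinc [r [x0r rxf fr]].
have cf := cont_of hd.
have [x1 x1in fx1] : exists2 x1, x1 \in `[x0, r] & f x1 = f x0 + 1.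
  apply: IVT; first exact: ltW.
    exact: continuous_subspaceT.
  apply/andP; split; [by rewrite ge_min lerDl ler01 | by rewrite le_max fr orbT].
move: x1in; rewrite in_itv /= => /andP[x0x1 x1r].
have x0x1' : x0 < x1.
  rewrite lt_neqAle x0x1 andbT; apply/eqP => E.
  by move: fx1; rewrite -E => /eqP; rewrite eq_sym -subr_eq0 addrC addKr oner_eq0.
have x1xf : (x1%:E <= xf)%E by apply: le_trans rxf; rewrite lee_fin.
have inI z : x0 < z -> (z%:E < xf)%E -> eoitv x0%:E xf z.
  by move=> h1 h2; split => //; rewrite lte_fin.
have posI (a b : R) : x0 <= a -> (b%:E <= xf)%E -> forall z, a < z < b -> 0 < df z.
  move=> h1 h2 z /andP[az zb]; apply: hpos; apply: inI.
    exact: le_lt_trans az.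
  by apply: lt_le_trans h2; rewrite lte_fin.
exists x1; split => //.
- move=> x [Ix1 Ix2]; rewrite lte_fin in Ix1; split.
  + move=> /andP[_ fx]; rewrite ltNge; apply/negP => x1x.
    move: x1x; rewrite le_eqVlt => /orP[/eqP E|x1x].
      by move: fx; rewrite -E fx1 ltxx.
    have := mono_lt hd x1x (posI x1 x (ltW x0x1') (ltW Ix2)).
    by rewrite fx1 => /lt_trans /(_ fx); rewrite ltxx.
  + move=> xx1; apply/andP; split.
      exact: mono_lt hd Ix1 (posI x0 x (lexx _) (ltW Ix2)).
    rewrite -fx1; exact: mono_lt hd xx1 (posI x x1 (ltW Ix1) x1xf).
- move=> x [Ix1 Ix2]; rewrite lte_fin in Ix1.
  have L0 : 0 < x1 - x0 by rewrite subr_gt0.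
  have [xx1|x1x] := leP x x1.
    have : f x0 < f x := mono_lt hd Ix1 (posI x0 x (lexx _) (ltW Ix2)).
    have : (x - x0) / (x1 - x0) <= 1.
      by rewrite ler_pdivrMr // mul1r lerD2r.
    lra.
  have [c1 c1in E1] := MVT x0x1' (fun z _ => hd z) (continuous_subspaceT cf).
  have [c2 c2in E2] := MVT x1x (fun z _ => hd z) (continuous_subspaceT cf).
  move: c1in c2in; rewrite !in_itv /= => /andP[c1a c1b] /andP[c2a c2b].
  have Ic1 : eoitv x0%:E xf c1 by apply: inI => //; apply: lt_le_trans x1xf; rewrite lte_fin.
  have Ic2 : eoitv x0%:E xf c2.
    by apply: inI; [exact: lt_trans x0x1' c2a | apply: lt_trans Ix2; rewrite lte_fin].
  have d12 := hinc _ _ Ic1 Ic2 (lt_trans c1b c2a).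
  move: E1; rewrite fx1 addrAC subrr add0r => E1.
  have Linv : (x1 - x0)^-1 = df c1.
    by apply/(mulIf (lt0r_neq0 L0)); rewrite mulVf ?gt_eqF // -E1.
  rewrite Linv.
  have Ef : f x - f x0 = df c2 * (x - x1) + 1 by rewrite -E2 fx1; ring.
  rewrite Ef.
  have : 0 <= (df c2 - df c1) * (x - x1) by apply: mulr_ge0; rewrite subr_ge0 ltW.
  nra.
Qed.

Lemma part1_gen (f df : R -> R) (x0 : R) (xf : \bar R) :
  (forall x : R, is_derive x 1 f (df x)) ->
  (forall x, eoitv x0%:E xf x -> 0 < df x) ->
  (forall x y, eoitv x0%:E xf x -> eoitv x0%:E xf y -> x < y -> df x < df y) ->
  (exists r, [/\ x0 < r, (r%:E <= xf)%E & f x0 + 1 <= f r]) ->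
  approx_with (expR (-1)) (\int[mu]_(x in eoitv x0%:E xf) (expR (- f x))%:E)%E
   ((expR (- f x0))%:E * mu [set x | eoitv x0%:E xf x /\ (f x0 < f x < f x0 + 1)%R])%E.
Proof.
move=> hd hpos hinc hr.
have cf := cont_of hd.
have [x1 [x0x1 x1xf hiff hlow]] := core hd hpos hinc hr.
set L := x1 - x0.
have L0 : 0 < L by rewrite subr_gt0.
have sub1 : `]x0, x1[%classic `<=` eoitv x0%:E xf.
  move=> x /=; rewrite in_itv /= => /andP[h1 h2]; split; rewrite ?lte_fin //.
  by apply: lt_le_trans x1xf; rewrite lte_fin.
have -> : [set x | eoitv x0%:E xf x /\ (f x0 < f x < f x0 + 1)] = `]x0, x1[%classic.
  apply/seteqP; split => x /=.
    move=> [Ix /(hiff _ Ix) h]; rewrite in_itv /= h andbT.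
    by case: Ix; rewrite lte_fin.
  move=> hx; have Ix := sub1 _ hx; split => //; apply/(hiff _ Ix).
  by move: hx; rewrite in_itv /= => /andP[].
rewrite lebesgue_measure_itv /= lte_fin x0x1 -EFinD -EFinM.
have mI := meas_eoitv x0%:E xf.
split.
- rewrite -EFinM.
  apply: (@le_trans _ _ (\int[mu]_(x in `]x0, x1[%classic) (expR (- f x))%:E)%E); last first.
    apply: ge0_subset_integral => //; first exact: mexp.
  apply: (@le_trans _ _ (\int[mu]_(x in `]x0, x1[%classic) (cst (expR (- f x0 - 1))%:E x))%E).
    rewrite integral_cst // /= lebesgue_measure_itv /= lte_fin x0x1 -EFinD -EFinM lee_fin.
    by rewrite mulrA -expRD addrC.
  apply: ge0_le_integral => //.
  + by move=> x _; rewrite lee_fin expR_ge0.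
  + exact: mexp.
  + move=> x hx.
    have hx' : x < x1 by move: hx => /=; rewrite in_itv /= => /andP[].
    have /andP[_ h] := (hiff _ (sub1 _ hx)).2 hx'.
    rewrite lee_fin /= ler_expR; lra.
- set K := expR (1 - f x0).
  apply: (@le_trans _ _ (\int[mu]_(x in eoitv x0%:E xf) (K * expR ((x0 - x) / L))%:E)%E).
    apply: ge0_le_integral => //.
    + exact: mexp.
    + apply/measurable_EFinP; apply: measurable_funTS.
      apply: continuous_measurable_fun => x.
      apply: (@continuousM _ R^o (fun=> K) (fun y => expR ((x0 - y) / L))); first exact: cst_continuous.
      apply: continuous_comp; last exact: continuous_expR.
      apply: differentiable_continuous; apply/derivable1_diffP.
      by case: (is_derive_aff x0 L x).
    + move=> x Ix; rewrite lee_fin /K -expRD ler_expR.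
      have := hlow _ Ix.
      have -> : (x0 - x) / L = - ((x - x0) / L) by rewrite -mulNr opprB.
      lra.
  apply: (@le_trans _ _ (\int[mu]_(x in `[x0, +oo[%classic) (K * expR ((x0 - x) / L))%:E)%E).
    apply: ge0_subset_integral => //.
    + apply/measurable_EFinP; apply: measurable_funTS.
      apply: continuous_measurable_fun => x.
      apply: (@continuousM _ R^o (fun=> K) (fun y => expR ((x0 - y) / L))); first exact: cst_continuous.
      apply: continuous_comp; last exact: continuous_expR.
      apply: differentiable_continuous; apply/derivable1_diffP.
      by case: (is_derive_aff x0 L x).
    + by move=> x _; rewrite lee_fin mulr_ge0 ?expR_ge0.
    + move=> x [h _]; rewrite /= in_itv /= andbT; rewrite lte_fin in h; exact: ltW.
  rewrite key // ?expR_ge0 // (expRN 1) invrK -EFinM lee_fin /K expRD mulrA.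
  by [].
Qed.

Lemma eoitvN (a b : \bar R) (y : R) : eoitv (- b) (- a) y <-> eoitv a b (- y).
Proof.
rewrite /eoitv /= !EFinN; split; case => h1 h2; split.
- by rewrite lteNr.
- by rewrite lteNl.
- by rewrite lteNl.
- by rewrite lteNr.
Qed.

Lemma core2 {f df : R -> R} {x0 : R} {xf : \bar R} :
  (forall x : R, is_derive x 1 f (df x)) ->
  (forall x, eoitv xf x0%:E x -> df x < 0) ->
  (forall x y, eoitv xf x0%:E x -> eoitv xf x0%:E y -> x < y -> df x < df y) ->
  (exists r, [/\ r < x0, (xf <= r%:E)%E & f x0 + 1 <= f r]) ->
  exists x1, [/\ x1 < x0, (xf <= x1%:E)%E,
     (forall x, eoitv xf x0%:E x -> (f x0 < f x < f x0 + 1) <-> x1 < x) &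
     (forall x, eoitv xf x0%:E x -> (x0 - x) / (x0 - x1) - 1 <= f x - f x0)].
Proof.
move=> hd hneg hinc [r [rx0 xfr fr]].
set g := fun y => f (- y).
set dg := fun y => - df (- y).
have hd' : forall y : R, is_derive y 1 g (dg y).
  move=> y; have h := is_derive_comp1 (is_deriveNid y 1) (hd (- y)).
  by apply: is_derive_eq; rewrite /dg mulrN1.
have memN (y : R) : eoitv (- x0)%:E (- xf) y <-> eoitv xf x0%:E (- y).
  by rewrite EFinN; exact: eoitvN.
have hpos' : forall y, eoitv (- x0)%:E (- xf) y -> 0 < dg y.
  by move=> y /memN Iy; rewrite /dg oppr_gt0; exact: hneg.
have hinc' : forall y z, eoitv (- x0)%:E (- xf) y -> eoitv (- x0)%:E (- xf) z -> y < z -> dg y < dg z.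
  move=> y z /memN Iy /memN Iz yz; rewrite /dg ltrN2; apply: hinc => //.
  by rewrite ltrN2.
have hr' : exists r, [/\ - x0 < r, (r%:E <= - xf)%E & g (- x0) + 1 <= g r].
  exists (- r); split.
  - by rewrite ltrN2.
  - by rewrite EFinN leeN2.
  - by rewrite /g !opprK.
have [x1' [x0x1 x1xf hiff hlow]] := core hd' hpos' hinc' hr'.
exists (- x1'); split.
- by rewrite ltrNl.
- by rewrite -leeN2 -EFinN opprK.
- move=> x Ix.
  have Iy : eoitv (- x0)%:E (- xf) (- x) by apply/memN; rewrite opprK.
  have := hiff _ Iy; rewrite /g !opprK => ->.
  by rewrite ltrNl.
- move=> x Ix.
  have Iy : eoitv (- x0)%:E (- xf) (- x) by apply/memN; rewrite opprK.
  have := hlow _ Iy; rewrite /g !opprK.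
  by rewrite [- x + x0]addrC [x1' + x0]addrC.
Qed.

Lemma part2_gen (f df : R -> R) (x0 : R) (xf : \bar R) :
  (forall x : R, is_derive x 1 f (df x)) ->
  (forall x, eoitv xf x0%:E x -> df x < 0) ->
  (forall x y, eoitv xf x0%:E x -> eoitv xf x0%:E y -> x < y -> df x < df y) ->
  (exists r, [/\ r < x0, (xf <= r%:E)%E & f x0 + 1 <= f r]) ->
  approx_with (expR (-1)) (\int[mu]_(x in eoitv xf x0%:E) (expR (- f x))%:E)%E
   ((expR (- f x0))%:E * mu [set x | eoitv xf x0%:E x /\ (f x0 < f x < f x0 + 1)%R])%E.
Proof.
move=> hd hneg hinc hr.
have cf := cont_of hd.
have [x1 [x1x0 x1xf hiff hlow]] := core2 hd hneg hinc hr.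
set L := x0 - x1.
have L0 : 0 < L by rewrite subr_gt0.
have sub1 : `]x1, x0[%classic `<=` eoitv xf x0%:E.
  move=> x /=; rewrite in_itv /= => /andP[h1 h2]; split; rewrite ?lte_fin //.
  by apply: le_lt_trans x1xf _; rewrite lte_fin.
have -> : [set x | eoitv xf x0%:E x /\ (f x0 < f x < f x0 + 1)] = `]x1, x0[%classic.
  apply/seteqP; split => x /=.
    move=> [Ix /(hiff _ Ix) h]; rewrite in_itv /= h /=.
    by case: Ix; rewrite lte_fin.
  move=> hx; have Ix := sub1 _ hx; split => //; apply/(hiff _ Ix).
  by move: hx; rewrite in_itv /= => /andP[].
rewrite lebesgue_measure_itv /= lte_fin x1x0 -EFinD -EFinM.
have mI := meas_eoitv xf x0%:E.
split.
- apply: (@le_trans _ _ (\int[mu]_(x in `]x1, x0[%classic) (expR (- f x))%:E)%E); last first.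
    apply: ge0_subset_integral => //; first exact: mexp.
  apply: (@le_trans _ _ (\int[mu]_(x in `]x1, x0[%classic) (cst (expR (- f x0 - 1))%:E x))%E).
    rewrite integral_cst // /= lebesgue_measure_itv /= lte_fin x1x0 -EFinD -EFinM lee_fin.
    by rewrite mulrA -expRD addrC.
  apply: ge0_le_integral => //.
  + by move=> x _; rewrite /= lee_fin expR_ge0.
  + exact: mexp.
  + move=> x hx.
    have hx' : x1 < x by move: hx => /=; rewrite in_itv /= => /andP[].
    have /andP[_ h] := (hiff _ (sub1 _ hx)).2 hx'.
    rewrite lee_fin /= ler_expR; lra.
- set K := expR (1 - f x0).
  have cK : continuous (fun x : R => K * expR ((x - x0) / L)).
    move=> x.
    apply: (@continuousM _ R^o (fun=> K) (fun y => expR ((y - x0) / L))); first exact: cst_continuous.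
    apply: continuous_comp; last exact: continuous_expR.
    apply: differentiable_continuous; apply/derivable1_diffP.
    have : is_derive x 1 (fun y : R => (y - x0) / L) (L^-1).
      by apply: is_derive_eq; rewrite scaler0 add0r subr0 scaler1.
    by case.
  apply: (@le_trans _ _ (\int[mu]_(x in eoitv xf x0%:E) (K * expR ((x - x0) / L))%:E)%E).
    apply: ge0_le_integral => //.
    + exact: mexp.
    + apply/measurable_EFinP; apply: measurable_funTS.
      exact: continuous_measurable_fun.
    + move=> x Ix; rewrite lee_fin /K -expRD ler_expR.
      have := hlow _ Ix.
      have -> : (x - x0) / L = - ((x0 - x) / L) by rewrite -mulNr opprB.
      lra.
  apply: (@le_trans _ _ (\int[mu]_(x in `]-oo, x0]%classic) (K * expR ((x - x0) / L))%:E)%E).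
    apply: ge0_subset_integral => //.
    + apply/measurable_EFinP; apply: measurable_funTS.
      exact: continuous_measurable_fun.
    + by move=> x _; rewrite lee_fin mulr_ge0 ?expR_ge0.
    + move=> x [_ h]; rewrite /= in_itv /=; rewrite lte_fin in h; exact: ltW.
  rewrite keyN // ?expR_ge0 // (expRN 1) invrK -EFinM lee_fin /K expRD mulrA.
  by [].
Qed.

Lemma part3_aux (f : R -> R) (a b f0 : R) : continuous f -> a < b ->
  (forall x, a < x < b -> f0 <= f x <= f0 + 1) ->
  approx_with (expR (-1)) (\int[mu]_(x in eoitv a%:E b%:E) (expR (- f x))%:E)%E
    ((expR (- f0) * (b - a))%:E).
Proof.
move=> cf ab hb.
have -> : eoitv a%:E b%:E = `]a, b[%classic.
  by apply/seteqP; split => x; rewrite /eoitv /= in_itv /= !lte_fin; [case=> -> ->|move=> /andP[]].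
have mab : measurable (`]a, b[%classic : set R) by [].
have mu_ab : mu `]a, b[%classic = (b - a)%:E.
  by rewrite lebesgue_measure_itv /= lte_fin ab -EFinD.
split.
- apply: (@le_trans _ _ (\int[mu]_(x in `]a, b[%classic) (cst (expR (- f0 - 1))%:E x))%E).
    rewrite integral_cst // /= mu_ab -EFinM lee_fin.
    by rewrite mulrA -expRD addrC.
  apply: ge0_le_integral => //.
  + by move=> x _; rewrite /= lee_fin expR_ge0.
  + exact: mexp.
  + move=> x hx.
    have /andP[_ h] : f0 <= f x <= f0 + 1 by apply: hb; move: hx => /=; rewrite in_itv.
    rewrite lee_fin /= ler_expR; lra.
- apply: (@le_trans _ _ (\int[mu]_(x in `]a, b[%classic) (cst (expR (- f0))%:E x))%E).
    apply: ge0_le_integral => //.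
    + exact: mexp.
    + move=> x hx.
      have /andP[h _] : f0 <= f x <= f0 + 1 by apply: hb; move: hx => /=; rewrite in_itv.
      rewrite lee_fin /= ler_expR; lra.
  rewrite integral_cst // /= mu_ab -EFinM lee_fin (expRN 1) invrK.
  apply: ler_peMl; first by rewrite mulr_ge0 ?expR_ge0 // subr_ge0 ltW.
  by have := expR_ge1Dx (1 : R); lra.
Qed.

Lemma part3_gen (f df : R -> R) (x0 xf : R) :
  (forall x : R, is_derive x 1 f (df x)) ->
  f x0 < f xf < f x0 + 1 ->
  (x0 < xf /\ (forall x, eoitv x0%:E xf%:E x -> 0 < df x)) \/
  (xf < x0 /\ (forall x, eoitv xf%:E x0%:E x -> df x < 0)) ->
  approx_with (expR (-1))
    (\int[mu]_(x in eoitv (Num.min x0 xf)%:E (Num.max x0 xf)%:E) (expR (- f x))%:E)%E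
    ((expR (- f x0) * `|xf - x0|)%:E).
Proof.
move=> hd /andP[f1 f2] [[x0xf hp]|[xfx0 hn]].
- rewrite (min_idPl (ltW x0xf)) (max_idPr (ltW x0xf)) gtr0_norm ?subr_gt0 //.
  apply: part3_aux (cont_of hd) x0xf _ => x /andP[h1 h2].
  have posI (u v : R) : x0 <= u -> v <= xf -> forall z, u < z < v -> 0 < df z.
    move=> hu hv z /andP[uz zv]; apply: hp; split; rewrite lte_fin.
      exact: le_lt_trans uz.
    exact: lt_le_trans hv.
  have := mono_lt hd h1 (posI _ _ (lexx _) (ltW h2)).
  have := mono_lt hd h2 (posI _ _ (ltW h1) (lexx _)).
  lra.
- rewrite (min_idPr (ltW xfx0)) (max_idPl (ltW xfx0)) ltr0_norm ?subr_lt0 // opprB.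
  have hdN : forall x : R, is_derive x 1 (fun y => - f y) (- df x).
    by move=> x; exact: is_deriveN.
  apply: part3_aux (cont_of hd) xfx0 _ => x /andP[h1 h2].
  have posI (u v : R) : xf <= u -> v <= x0 -> forall z, u < z < v -> 0 < - df z.
    move=> hu hv z /andP[uz zv]; rewrite oppr_gt0; apply: hn; split; rewrite lte_fin.
      exact: le_lt_trans uz.
    exact: lt_le_trans hv.
  have := mono_lt hdN h1 (posI _ _ (lexx _) (ltW h2)).
  have := mono_lt hdN h2 (posI _ _ (ltW h1) (lexx _)).
  lra.
Qed.
End H.

Theorem lemma4p4 (R : realType) :
  exists c : R, 0 < c /\
  forall p : {poly R}, poly_to_pinfty p ->
  (* (1) *)
  (forall (x0 : R) (xf : \bar R),
     (x0%:E < xf)%E ->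
     deriv_pos_incr p (eoitv x0%:E xf) ->
     (forall r : R, xf = r%:E -> p.[x0] + 1 <= p.[r]) ->
     approx_with c (int_exp_neg p (eoitv x0%:E xf))
       ((expR (- p.[x0]))%:E *
        @lebesgue_measure R [set x | eoitv x0%:E xf x /\
                                     (p.[x0] < p.[x] < p.[x0] + 1)%R])%E) /\
  (* (2) *)
  (forall (x0 : R) (xf : \bar R),
     (xf < x0%:E)%E ->
     deriv_neg_incr p (eoitv xf x0%:E) ->
     (forall r : R, xf = r%:E -> p.[x0] + 1 <= p.[r]) ->
     approx_with c (int_exp_neg p (eoitv xf x0%:E))
       ((expR (- p.[x0]))%:E *
        @lebesgue_measure R [set x | eoitv xf x0%:E x /\
                                     (p.[x0] < p.[x] < p.[x0] + 1)%R])%E) /\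
  (* (3) *)
  (forall (x0 xf : R),
     p.[x0] < p.[xf] < p.[x0] + 1 ->
     (x0 < xf /\ deriv_pos_incr p (eoitv x0%:E xf%:E)) \/
     (xf < x0 /\ deriv_neg_incr p (eoitv xf%:E x0%:E)) ->
     approx_with c
       (int_exp_neg p (eoitv (Num.min x0 xf)%:E (Num.max x0 xf)%:E))
       ((expR (- p.[x0]) * `|xf - x0|)%:E)).
Proof.
exists (expR (-1)); split; first exact: expR_gt0.
move=> p [hpinf hninf].
have hd : forall x : R, is_derive x 1 (horner p) (horner p^`() x).
  by move=> x; exact: is_derive_poly.
split; [|split].
- move=> x0 xf x0xf [hpos hinc] hfin; rewrite /int_exp_neg.
  apply: (@part1_gen R (horner p) (horner p^`()) x0 xf hd hpos hinc).
  clear hpos hinc; move: x0xf hfin; case: xf => [r| |] x0xf hfin.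
  + exists r; split => //; last exact: hfin.
  + have /cvgryPge/(_ (p.[x0] + 1)) := hpinf.
    case=> M [_ HM]; exists (Num.max M x0 + 1); split.
    * by rewrite ltr_pwDr // le_max lexx orbT.
    * by rewrite leey.
    * by apply: HM; rewrite ltr_pwDr // le_max lexx.
  + by move: x0xf; rewrite ltNge leNye.
- move=> x0 xf xfx0 [hneg hinc] hfin; rewrite /int_exp_neg.
  apply: (@part2_gen R (horner p) (horner p^`()) x0 xf hd hneg hinc).
  clear hneg hinc; move: xfx0 hfin; case: xf => [r| |] xfx0 hfin.
  + exists r; split => //; last exact: hfin.
  + by move: xfx0; rewrite ltNge leey.
  + have /cvgryPge/(_ (p.[x0] + 1)) := hninf.
    case=> M [_ HM]; exists (Num.min M x0 - 1); split.
    * by rewrite ltrBlDr ltr_pwDr // ge_min lexx orbT.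
    * by rewrite leNye.
    * by apply: HM; rewrite ltrBlDr ltr_pwDr // ge_min lexx.
- move=> x0 xf hval hcase; rewrite /int_exp_neg.
  apply: (@part3_gen R (horner p) (horner p^`()) x0 xf hd hval).
  by case: hcase => [[h [hp _]]|[h [hn _]]]; [left|right].
Qed.
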